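(* Let $w$ be an integer with $w-1\equiv 1$ or $3\pmod 6$, and for $i\ge0$ let $\dot{\mathcal{D}}_i$ denote the set of $i$-dimensional subspaces of $\mathrm{GF}(2)^{w-1}$ each of which is orthogonal (over $\mathrm{GF}(2)$) to the characteristic vectors of all blocks of at least one STS$(w-1)$ on $\{1,\ldots,w-1\}$. Let $i,j$ be nonnegative integers with $i\le j$. If $\dot{\mathcal{D}}_j$ is nonempty, then every subspace from $\dot{\mathcal{D}}_i$ is contained in exactly $\dot\Gamma_{w,i,j}$ subspaces from $\dot{\mathcal{D}}_j$, where $$\dot\Gamma_{w,i,j}=\left(\left(\tfrac{w}{2^i}\right)!\right)^{2^i}\Bigg/\left(2^{\frac{(j-i)(j+i+1)}2}\left(\left(\tfrac{w}{2^j}\right)!\right)^{2^j}[j-i]_2!\right).$$ In particular, $|\dot{\mathcal{D}}_j|=\dot\Gamma_{w,0,j}$.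
   Context: A Steiner triple system STS$(n)$ on $\{1,\ldots,n\}$ is a collection of 3-subsets (blocks) such that every 2-subset is contained in exactly one block. Blocks are identified with their characteristic vectors in $\mathrm{GF}(2)^{n}$; $x\perp y$ means $\sum_t x_ty_t=0$. The $q$-factorial is $[n]_q!=\prod_{s=1}^n\sum_{r=0}^{s-1}q^r$, with $[0]_q!=1$. *)

(* Defs.v *)
From HB Require Import structures.
From mathcomp Require Import all_boot all_order all_algebra.
Set Implicit Arguments. Unset Strict Implicit. Unset Printing Implicit Defensive.
Import GRing.Theory.

Definition is_STS (n : nat) (B : {set {set 'I_n}}) : bool :=
  [forall b in B, #|b| == 3] &&
  [forall x : 'I_n, forall y : 'I_n,
     (x != y) ==> (#|[set b in B | (x \in b) && (y \in b)]| == 1)].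

Definition charvec (n : nat) (b : {set 'I_n}) : 'rV['F_2]_n :=
  (\row_t (t \in b)%:R)%R.

Definition orthb (n : nat) (x y : 'rV['F_2]_n) : bool :=
  (\sum_(t < n) x 0 t * y 0 t == 0)%R.

Definition is_subspace_dim (n i : nat) (U : {set 'rV['F_2]_n}) : bool :=
  [exists M : 'M['F_2]_n, (U == [set x | (x <= M)%MS]) && (\rank M == i)].

Definition Ddot (n i : nat) : {set {set 'rV['F_2]_n}} :=
  [set U | is_subspace_dim i U &&
     [exists B : {set {set 'I_n}}, is_STS B &&
        [forall b in B, forall x in U, orthb x (charvec b)]]].

Definition qfact (q n : nat) : nat :=
  \prod_(1 <= s < n.+1) \sum_(0 <= r < s) q ^ r.

(* numerator and denominator of \dot\Gamma_{w,i,j};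
   (j-i)(j+i+1) is always even, so the halving is exact. *)
Definition Gamma_num (w i : nat) : nat := ((w %/ 2 ^ i)`!) ^ (2 ^ i).
Definition Gamma_den (w i j : nat) : nat :=
  2 ^ (((j - i) * (j + i + 1)) %/ 2) * ((w %/ 2 ^ j)`!) ^ (2 ^ j) * qfact 2 (j - i).

(* Main.v *)
Require Import Defs.
From mathcomp Require Import all_boot all_order all_algebra.
From mathcomp Require Import all_fingroup mxabelem zify.

Module PartA.
Set Implicit Arguments. Unset Strict Implicit. Unset Printing Implicit Defensive.
Import GRing.Theory.
Local Open Scope ring_scope.

Lemma F2_cases (z : 'F_2) : z = 0 \/ z = 1.
Proof. by case: z => [[|[|k]] Hk] //; [left|right]; apply: val_inj. Qed.

Lemma F2_addxx (z : 'F_2) : z + z = 0.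
Proof. by case: (F2_cases z) => ->; apply/eqP. Qed.

Definition sgn (z : 'F_2) : int := if z == 0 then 1 else -1.

Lemma sgnD a b : sgn (a + b) = sgn a * sgn b.
Proof. by case: (F2_cases a) => ->; case: (F2_cases b) => ->; rewrite /sgn /= ?addr0 ?add0r ?mulr1 ?mul1r //; rewrite (_ : 1 + 1 = 0) //; apply/eqP. Qed.

Lemma sgnE z : sgn z = 1 - 2 * (z != 0)%:R.
Proof. by case: (F2_cases z) => ->. Qed.

Lemma mxF2_addxx m n (A : 'M['F_2]_(m, n)) : A + A = 0.
Proof. by apply/matrixP => i j; rewrite !mxE F2_addxx. Qed.

Lemma mxF2_opp m n (A : 'M['F_2]_(m, n)) : - A = A.
Proof. by apply/eqP; rewrite eq_sym -subr_eq0 opprK mxF2_addxx. Qed.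

Lemma card_F2 : #|'F_2| = 2%N.
Proof. by rewrite card_Fp. Qed.

End PartA.
Import PartA.

Module PartB.
Set Implicit Arguments. Unset Strict Implicit. Unset Printing Implicit Defensive.
Import GRing.Theory Num.Theory.
Local Open Scope ring_scope.

Lemma sum_eq_opp (T : finType) (F : T -> int) (h : T -> T) :
  injective h -> (forall l, F (h l) = - F l) -> \sum_l F l = 0.
Proof.
move=> hi hF; have E := reindex_inj hi (op := +%R) (x := 0) (P := xpredT) (F := F).
rewrite (eq_bigr _ (fun l _ => hF l)) sumrN in E.
by move/eqP: E; rewrite -subr_eq0 opprK -mulr2n mulrn_eq0 /= => /eqP.
Qed.

Lemma charsum_r k (a : 'cV['F_2]_k) :
  \sum_(l : 'rV['F_2]_k) sgn ((l *m a) 0 0) = (a == 0)%:R * (2 ^ k)%:R.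
Proof.
have [->|anz] := eqVneq a 0.
  rewrite (eq_bigr (fun _ => 1)) => [|l _]; last by rewrite mulmx0 mxE.
  by rewrite sumr_const card_mx card_F2 mul1n mul1r.
have [r ar] : exists r, a r 0 != 0.
  apply/existsP; apply: contraR anz => /existsPn H; apply/eqP/matrixP => i j.
  by rewrite (ord1 j) mxE; move: (H i); rewrite negbK => /eqP.
have ar1 : a r 0 = 1 by case: (F2_cases (a r 0)) ar => ->.
rewrite mul0r; apply: (sum_eq_opp (h := fun l => l + delta_mx 0 r)).
  exact: addIr.
move=> l; rewrite mulmxDl mxE sgnD.
rewrite (_ : (delta_mx 0 r *m a) 0 0 = 1) ?mulrN1 //.
by rewrite -rowE mxE ar1.
Qed.

Lemma charsum_c k (l : 'rV['F_2]_k) :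
  \sum_(a : 'cV['F_2]_k) sgn ((l *m a) 0 0) = (l == 0)%:R * (2 ^ k)%:R.
Proof.
have [->|lnz] := eqVneq l 0.
  rewrite (eq_bigr (fun _ => 1)) => [|a _]; last by rewrite mul0mx mxE.
  by rewrite sumr_const card_mx card_F2 muln1 mul1r.
have [r ar] : exists r, l 0 r != 0.
  apply/existsP; apply: contraR lnz => /existsPn H; apply/eqP/matrixP => i j.
  by rewrite (ord1 i) mxE; move: (H j); rewrite negbK => /eqP.
have ar1 : l 0 r = 1 by case: (F2_cases (l 0 r)) ar => ->.
rewrite mul0r; apply: (sum_eq_opp (h := fun a => a + delta_mx r 0)).
  exact: addIr.
move=> a; rewrite mulmxDr mxE sgnD.
rewrite (_ : (l *m delta_mx r 0) 0 0 = 1) ?mulrN1 //.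
by rewrite -colE mxE ar1.
Qed.

End PartB.
Import PartB.

Module PartC.
Set Implicit Arguments. Unset Strict Implicit. Unset Printing Implicit Defensive.
Import GRing.Theory Num.Theory.
Local Open Scope ring_scope.

Definition wt n (x : 'rV['F_2]_n) := #|[set t | x 0 t != 0]|.
Definition fib k n (B : 'M['F_2]_(k,n)) (a : 'cV['F_2]_k) := [set t | col t B == a].
Definition balv k n (B : 'M['F_2]_(k,n)) :=
  forall l : 'rV_k, l != 0 -> ((wt (l *m B)).*2 = n.+1)%N.
Definition balf k n (B : 'M['F_2]_(k,n)) :=
  forall a : 'cV_k, ((#|fib B a| + (a == 0%R)) * 2 ^ k = n.+1)%N.

Lemma mul_col k n (B : 'M['F_2]_(k,n)) (l : 'rV_k) t :
  (l *m B) 0 t = (l *m col t B) 0 0.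
Proof. by rewrite !mxE; apply: eq_bigr => j _; rewrite !mxE. Qed.

Lemma sum_sgn n (x : 'rV['F_2]_n) :
  \sum_t sgn (x 0 t) = n%:R - 2 * (wt x)%:R.
Proof.
rewrite (eq_bigr _ (fun t _ => sgnE (x 0 t))) sumrB sumr_const card_ord.
rewrite -mulr_sumr -natr_sum; congr (_ - 2 * _%:R).
rewrite /wt -sum1_card [RHS]big_mkcond /=; apply: eq_bigr => t _.
by rewrite inE; case: (_ != 0).
Qed.

Lemma key k n (B : 'M['F_2]_(k,n)) (l : 'rV_k) :
  \sum_(a : 'cV_k) sgn ((l *m a) 0 0) * (#|fib B a| + (a == 0))%:R
  = (n.+1)%:R - 2 * (wt (l *m B))%:R.
Proof.
have E1 : \sum_t sgn ((l *m B) 0 t) =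
          \sum_(a : 'cV_k) sgn ((l *m a) 0 0) * (#|fib B a|)%:R.
  rewrite (partition_big (fun t => col t B) xpredT) //=.
  apply: eq_bigr => a _.
  rewrite (eq_bigr (fun _ => sgn ((l *m a) 0 0))) => [|t /eqP <-]; last by rewrite mul_col.
  rewrite sumr_const mulr_natr; congr (_ *+ _).
  by apply: eq_card => t; rewrite inE.
have E2 : \sum_(a : 'cV_k) sgn ((l *m a) 0 0) * (a == 0)%:R = 1.
  rewrite (bigD1 0) //= eqxx mulmx0 mxE /sgn eqxx mulr1 big1 ?addr0 // => a /negbTE ->.
  by rewrite mulr0.
rewrite (eq_bigr (fun a => sgn ((l *m a) 0 0) * (#|fib B a|)%:R
                         + sgn ((l *m a) 0 0) * (a == 0)%:R)); last first.
  by move=> a _; rewrite natrD mulrDr.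
rewrite big_split /= E2 -E1 sum_sgn; lia.
Qed.

Lemma wt0 n : wt (0 : 'rV['F_2]_n) = 0%N.
Proof. by apply: eq_card0 => t; rewrite inE mxE eqxx. Qed.

Lemma balf_balv k n (B : 'M['F_2]_(k,n)) : balf B -> balv B.
Proof.
move=> hf l lnz.
have c0 a : (#|fib B a| + (a == 0%R))%N = (#|fib B 0| + 1)%N.
  apply/eqP; rewrite -(eqn_pmul2r (expn_gt0 2 k)) hf.
  by move: (hf 0); rewrite eqxx => ->.
have := key B l.
rewrite (eq_bigr (fun a => sgn ((l *m a) 0 0) * (#|fib B 0| + 1)%:R)); last first.
  by move=> a _; rewrite c0.
rewrite -mulr_suml charsum_c (negbTE lnz) mul0r mul0r => /eqP.
rewrite eq_sym subr_eq0 => /eqP H.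
apply/eqP; rewrite -muln2 -(eqr_nat int) H natrM mulrC //.
Qed.

Lemma balv_balf k n (B : 'M['F_2]_(k,n)) : balv B -> balf B.
Proof.
move=> hv b.
pose c a : int := (#|fib B a| + (a == 0%R))%:R.
have S1 : \sum_(l : 'rV_k) sgn ((l *m b) 0 0) *
          \sum_(a : 'cV_k) sgn ((l *m a) 0 0) * c a = (n.+1)%:R.
  rewrite (eq_bigr (fun l => sgn ((l *m b) 0 0) * ((n.+1)%:R - 2 * (wt (l *m B))%:R)));
    last by move=> l _; rewrite key.
  rewrite (bigD1 0) //= !mul0mx wt0 mxE /sgn eqxx mul1r mulr0 subr0.
  rewrite big1 ?addr0 // => l lnz.
  rewrite (_ : 2 * (wt (l *m B))%:R = (n.+1)%:R :> int) ?subrr ?mulr0 //.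
  by rewrite -(hv l lnz) -muln2 natrM mulrC.
have S2 : \sum_(l : 'rV_k) sgn ((l *m b) 0 0) *
          \sum_(a : 'cV_k) sgn ((l *m a) 0 0) * c a = c b * (2 ^ k)%:R.
  rewrite (eq_bigr (fun l => \sum_(a : 'cV_k) sgn ((l *m (a + b)) 0 0) * c a)); last first.
    move=> l _; rewrite mulr_sumr; apply: eq_bigr => a _.
    by rewrite mulrA -sgnD mulmxDr [in RHS]mxE addrC.
  rewrite exchange_big /=.
  rewrite (eq_bigr (fun a => c a * ((a + b == 0)%:R * (2 ^ k)%:R))); last first.
    by move=> a _; rewrite -mulr_suml charsum_r mulrC.
  rewrite (bigD1 b) //= mxF2_addxx eqxx mul1r big1 ?addr0 // => a nab.
  rewrite (_ : (a + b == 0) = false) ?mul0r ?mulr0 //.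
  apply/negbTE; apply: contra nab; rewrite addr_eq0 mxF2_opp //.
have := S1; rewrite S2 /c => H.
by move: H; rewrite -natrM => /eqP; rewrite eqr_nat => /eqP.
Qed.

End PartC.
Import PartC.

Module PartD.
Set Implicit Arguments. Unset Strict Implicit. Unset Printing Implicit Defensive.
Import GRing.Theory Num.Theory.

Section STS.
Variables (n : nat) (B : {set {set 'I_n}}).
Hypothesis hB : is_STS B.

Lemma sts3 b : b \in B -> #|b| = 3.
Proof. by case/andP: hB => /forall_inP H _ /H /eqP. Qed.

Lemma sts_pair x y : x != y -> #|[set b in B | (x \in b) && (y \in b)]| = 1.
Proof. by case/andP: hB => _ /forallP/(_ x)/forallP/(_ y)/implyP H /H/eqP. Qed.

Lemma sts_ex x y : x != y -> exists2 b, b \in B & (x \in b) && (y \in b).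
Proof.
move/sts_pair/eqP/cards1P => [b Hb]; exists b; have : b \in [set b]  by rewrite inE.
  by rewrite -Hb inE => /andP[].
by rewrite -Hb inE => /andP[].
Qed.

Lemma sts_uniq x y b1 b2 : x != y -> b1 \in B -> b2 \in B ->
  x \in b1 -> y \in b1 -> x \in b2 -> y \in b2 -> b1 = b2.
Proof.
move=> /sts_pair/eqP/cards1P [b Hb] B1 B2 x1 y1 x2 y2.
have : b1 \in [set b] by rewrite -Hb inE B1 x1 y1.
have : b2 \in [set b] by rewrite -Hb inE B2 x2 y2.
by rewrite !inE => /eqP -> /eqP ->.
Qed.

Lemma sts_third b x y : b \in B -> x != y -> x \in b -> y \in b ->
  exists z, [/\ z \in b, z != x, z != y &
             forall u, u \in b -> [\/ u = x, u = y | u = z]].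
Proof.
move=> Bb xy xb yb.
have : #|b :\: [set x; y]| = 1%N.
  rewrite cardsD sts3 // (_ : b :&: [set x; y] = [set x; y]) ?cards2 ?xy //.
  by apply/setIidPr; apply/subsetP => u; rewrite !inE => /orP[] /eqP ->.
move/eqP/cards1P => [z Hz].
have : z \in b :\: [set x; y] by rewrite Hz inE.
rewrite !inE negb_or => /andP[/andP[zx zy] zb].
exists z; split => // u ub.
case: (eqVneq u x) => [->|ux]; first by constructor 1.
case: (eqVneq u y) => [->|uy]; first by constructor 2.
have : u \in b :\: [set x; y] by rewrite !inE negb_or ux uy.
by rewrite Hz inE => /eqP ->; constructor 3.
Qed.

Lemma card1_of (T : finType) (A : {set T}) x :
  x \in A -> (forall y, y \in A -> y = x) -> #|A| = 1%N.
Proof.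
move=> xA H; rewrite (_ : A = [set x]) ?cards1 //.
by apply/setP => y; rewrite inE; apply/idP/eqP => [/H|->].
Qed.

Variable S : {set 'I_n}.
Hypothesis hS : forall b, b \in B -> ~~ odd #|b :&: S|.

Lemma sts_wt : S != set0 -> (#|S|).*2 = n.+1.
Proof.
case/set0Pn => s sS.
pose R s' t := [exists b in B, [&& s \in b, s' \in b & t \in b]].
pose S' := S :\ s; pose T := ~: S.
have C1 s' : s' \in S' -> #|[set t in T | R s' t]| = 1%N.
  rewrite !inE => /andP[s's s'S].
  have ss' : s != s' by rewrite eq_sym.
  have [b Bb /andP[sb s'b]] := sts_ex ss' .
  have [z [zb zs zs' Hz]] := sts_third Bb ss' sb s'b.
  have zT : z \in T.
    rewrite inE; apply/negP => zS; move: (hS Bb).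
    rewrite (_ : b :&: S = b) ?sts3 //; apply/setIidPl/subsetP => u /Hz.
    by case=> ->.
  apply: (card1_of (x := z)).
    by rewrite inE zT; apply/existsP; exists b; rewrite Bb sb s'b zb.
  move=> t; rewrite !inE => /andP[tS /exists_inP [b' Bb' /and3P[sb' s'b' tb']]].
  have eb : b' = b by apply: (sts_uniq ss' Bb' Bb).
  rewrite eb in tb'; case: (Hz _ tb') => // et.
    by move: tS; rewrite et ?inE sS.
  by move: tS; rewrite et ?inE s'S.
have C2 t : t \in T -> #|[set s' in S' | R s' t]| = 1%N.
  rewrite inE => tS.
  have st : s != t by apply: contraNneq tS => <-.
  have [b Bb /andP[sb tb]] := sts_ex st.
  have [z [zb zs zt Hz]] := sts_third Bb st sb tb.
  have zS : z \in S.
    apply/negPn/negP => zS; move: (hS Bb).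
    rewrite (_ : b :&: S = [set s]) ?cards1 //; apply/setP => u.
    rewrite !inE; apply/andP/eqP => [[/Hz [->|->|->] //]|->]; last by [].
      by move=> uS; rewrite uS in tS.
    by move=> uS; rewrite uS in zS.
  apply: (card1_of (x := z)).
    by rewrite !inE zs zS; apply/existsP; exists b; rewrite Bb sb zb tb.
  move=> s'; rewrite !inE => /andP[/andP[s's s'S] /exists_inP [b' Bb' /and3P[sb' s'b' tb']]].
  have eb : b' = b by apply: (sts_uniq st Bb' Bb).
  rewrite eb in s'b'; case: (Hz _ s'b') => // es'.
    by rewrite es' eqxx in s's.
  by rewrite -es' s'S in tS.
have E : #|S'| = #|T|.
  transitivity (\sum_(s' in S') \sum_(t in T) (R s' t : nat)).
    rewrite -sum1_card; apply: eq_bigr => s' /C1 <-.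
    rewrite -sum1_card big_mkcond [RHS]big_mkcond /=; apply: eq_bigr => t _.
    by rewrite inE; case: (t \in T); case: (R s' t).
  rewrite exchange_big /= -sum1_card; apply: eq_bigr => t /C2 <-.
  rewrite -sum1_card big_mkcond [RHS]big_mkcond /=; apply: eq_bigr => s' _.
  by rewrite !inE; case: (R s' t); rewrite ?andbT ?andbF; case: (_ && _).
have c1 : #|S'| = (#|S| - 1)%N by rewrite [#|S|](cardsD1 s) sS add1n subn1.
have c2 : #|T| = (n - #|S|)%N by rewrite /T cardsCs card_ord setCK.
have : (0 < #|S|)%N by apply/card_gt0P; exists s.
have : (#|S| <= n)%N by rewrite (leq_trans (max_card _)) ?card_ord.
rewrite -muln2; lia.
Qed.
End STS.

End PartD.
Import PartD.

Module PartE.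
Set Implicit Arguments. Unset Strict Implicit. Unset Printing Implicit Defensive.
Import GRing.Theory Num.Theory.
Local Open Scope ring_scope.

Definition supp n (x : 'rV['F_2]_n) := [set t | x 0 t != 0].

Lemma F2_nat m : ((m%:R : 'F_2) == 0) = ~~ odd m.
Proof. by rewrite -(dvdn_charf (char_Fp (isT : prime 2))) dvdn2. Qed.

Lemma orth_parity n (x : 'rV['F_2]_n) b :
  orthb x (charvec b) = ~~ odd #|b :&: supp x|.
Proof.
rewrite /orthb -F2_nat (eq_bigr (fun t => ((t \in b :&: supp x) : nat)%:R)); last first.
  move=> t _; rewrite !inE !mxE.
  by case: (F2_cases (x 0 t)) => ->; case: (t \in b); rewrite ?mulr0 ?mulr1 ?mul0r ?andbF ?andbT ?eqxx //=.
rewrite -natr_sum -sum1_card [in RHS]big_mkcond.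
by [].
Qed.

Definition balS n (U : {set 'rV['F_2]_n}) :=
  forall x, x \in U -> x != 0 -> ((wt x).*2 = n.+1)%N.

Lemma Ddot_bal n k U : U \in Ddot n k -> balS U.
Proof.
rewrite inE => /andP[_ /existsP [B /andP [hB /forall_inP H]]] x xU xnz.
apply: (sts_wt hB (S := supp x)).
  by move=> b Bb; rewrite -orth_parity; move: (H b Bb) => /forall_inP; apply.
apply: contra xnz => /eqP S0; apply/eqP/matrixP => i j.
rewrite (ord1 i) mxE; apply/eqP; apply/negPn/negP => h.
have : j \in supp x by rewrite inE.
by rewrite S0 inE.
Qed.

End PartE.
Import PartE.

Module PartF.
Set Implicit Arguments. Unset Strict Implicit. Unset Printing Implicit Defensive.
Import GRing.Theory Num.Theory.
Local Open Scope ring_scope.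

Definition sp n m (M : 'M['F_2]_(m,n)) := [set x : 'rV_n | (x <= M)%MS].

Lemma card_sp n m (M : 'M['F_2]_(m,n)) : #|sp M| = (2 ^ \rank M)%N.
Proof. by have := card_rowg M; rewrite card_F2. Qed.

Lemma balv_free k n (B : 'M['F_2]_(k,n)) : balv B -> row_free B.
Proof.
move=> hv; rewrite -kermx_eq0; apply: contraT => /rowV0Pn [v vk vnz].
have := hv v vnz; rewrite (sub_kermxP vk) wt0 //.
Qed.

Lemma balv_balS k n (B : 'M['F_2]_(k,n)) : balv B -> balS (sp B).
Proof.
move=> hv x; rewrite inE => /submxP [l ->] xnz; apply: hv.
by apply: contra xnz => /eqP ->; rewrite mul0mx.
Qed.

Lemma balS_balv k n (B : 'M['F_2]_(k,n)) : row_free B -> balS (sp B) -> balv B.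
Proof.
move=> rf hb l lnz; apply: hb; first by rewrite inE submxMl.
apply: contra lnz => /eqP h; apply/eqP; apply: (row_free_inj rf).
by rewrite /= h mul0mx.
Qed.

Lemma subdim_ex n k U : is_subspace_dim k U ->
  exists B : 'M['F_2]_(k,n), row_free B /\ U = sp B.
Proof.
case/existsP => M /andP[/eqP -> /eqP hr]; subst k.
exists (row_base M); split; first exact: row_base_free.
by apply/setP => x; rewrite !inE eq_row_base.
Qed.

Lemma subdim_of n k (B : 'M['F_2]_(k,n)) : row_free B -> is_subspace_dim k (sp B).
Proof.
move=> rf; apply/existsP; exists <<B>>%MS; rewrite mxrank_gen (eqP rf) eqxx andbT.
by apply/eqP/setP => x; rewrite !inE genmxE.
Qed.

Lemma count_card (T : finType) (P : pred T) : count P (enum T) = #|P|.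
Proof. by rewrite -sum1_count -sum1_card big_enum_cond /=. Qed.

Lemma fib_perm (T : finType) (k : nat) (f g : 'I_k -> T) :
  (forall a, #|[pred t | f t == a]| = #|[pred t | g t == a]|) ->
  exists s : 'S_k, forall t, f t = g (s t).
Proof.
move=> H.
have : perm_eq [seq f t | t <- enum 'I_k] [tuple g t | t < k].
  apply/allP => a _ /=.
  rewrite !count_map -!enumT !count_card; apply/eqP.
  by rewrite (@eq_card _ _ [pred t | f t == a]) // H; apply: eq_card.
case/tuple_permP => s hs; exists s => t.
have := congr1 (fun l => nth (f t) l t) hs.
rewrite /= (nth_map t) ?size_enum_ord // nth_ord_enum.
by rewrite (nth_map t) ?size_enum_ord // nth_ord_enum tnth_map tnth_ord_tuple.
Qed.

Lemma sts_preim n (s : 'S_n) (B : {set {set 'I_n}}) :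
  is_STS B -> is_STS [set s @^-1: (b : {set 'I_n}) | b in B].
Proof.
move=> hB; apply/andP; split.
  apply/forall_inP => b' /imsetP [b Bb ->].
  by rewrite card_preimset ?(sts3 hB) //; exact: perm_inj.
apply/forallP => x; apply/forallP => y; apply/implyP => xy.
have sxy : s x != s y by rewrite (inj_eq perm_inj).
have -> : [set b' in [set s @^-1: (b : {set 'I_n}) | b in B] | (x \in b') && (y \in b')] =
          (fun b : {set 'I_n} => s @^-1: b) @: [set b in B | (s x \in b) && (s y \in b)].
  apply/setP => b'; rewrite inE; apply/andP/imsetP.
    case=> /imsetP [b Bb ->]; rewrite !inE => /andP[xb yb].
    by exists b => //; rewrite inE Bb xb yb.
  case=> b; rewrite inE => /andP[Bb /andP[xb yb]] ->; split.
    exact: imset_f.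
  by rewrite !inE xb yb.
rewrite card_imset ?(sts_pair hB sxy) //.
move=> b1 b2 h; apply/setP => u.
have := congr1 (fun A : {set 'I_n} => (s^-1)%g u \in A) h; rewrite !inE permKV //.
Qed.

Lemma Ddot_of n j V V0 : V0 \in Ddot n j -> is_subspace_dim j V -> balS V ->
  V \in Ddot n j.
Proof.
move=> hV0 hV bV; have bV0 := Ddot_bal hV0.
move: hV0; rewrite inE => /andP[hsd0 /existsP [B /andP[hB /forall_inP Horth]]].
have [B0 [rf0 eV0]] := subdim_ex hsd0.
have [B1 [rf1 eV1]] := subdim_ex hV.
have hv0 : balv B0 by apply: balS_balv rf0 _; rewrite -eV0.
have hv1 : balv B1 by apply: balS_balv rf1 _; rewrite -eV1.
have hf0 := balv_balf hv0; have hf1 := balv_balf hv1.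
have [s hs] : exists s : 'S_n, forall t, col t B1 = col (s t) B0.
  apply: (fib_perm (f := fun t => col t B1) (g := fun t => col t B0)) => a.
  have E : #|fib B1 a| = #|fib B0 a|.
    apply/eqP; rewrite -(eqn_add2r (a == 0)) -(eqn_pmul2r (expn_gt0 2 j)).
    by rewrite hf0 hf1.
  transitivity #|fib B1 a|; first by apply: eq_card => t; rewrite !inE.
  by rewrite E; apply: eq_card => t; rewrite !inE.
rewrite inE hV /=; apply/existsP; exists [set s @^-1: (b : {set 'I_n}) | b in B].
rewrite sts_preim //=.
apply/forall_inP => b' /imsetP [b Bb ->]; apply/forall_inP => x.
rewrite eV1 inE => /submxP [l ->].
have : orthb (l *m B0) (charvec b).
  by move: (Horth b Bb) => /forall_inP; apply; rewrite eV0 inE submxMl.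
rewrite /orthb => /eqP H; apply/eqP.
transitivity (\sum_(t < n) (l *m B0) 0 t * charvec b 0 t); last exact: H.
rewrite [RHS](reindex_inj (@perm_inj _ s)) /=.
apply: eq_bigr => t _.
by rewrite [(l *m B1) 0 t]mul_col [(l *m B0) 0 (s t)]mul_col hs /charvec !mxE inE.
Qed.

End PartF.
Import PartF.

Module PartG.
Set Implicit Arguments. Unset Strict Implicit. Unset Printing Implicit Defensive.
Import GRing.Theory Num.Theory.
Local Open Scope ring_scope.

Definition addvx n (U : {set 'rV['F_2]_n}) x := U :|: [set u + x | u in U].

Lemma addv_sp n k (B : 'M['F_2]_(k,n)) (x : 'rV['F_2]_n) : addvx (sp B) x = sp (col_mx B x).
Proof.
apply/setP => y; rewrite !inE -addsmxE; apply/orP/idP.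
  case=> [yB|/imsetP [u]]; first by rewrite (submx_trans yB) ?addsmxSl.
  rewrite inE => uB ->; apply: addmx_sub; first by rewrite (submx_trans uB) ?addsmxSl.
  exact: addsmxSr.
case/sub_addsmxP => [[u c]] /= ->.
have [c0|c1] : c = 0 \/ c = 1.
  case: (F2_cases (c 0 0)) => h; [left|right]; apply/matrixP => i j;
    by rewrite (ord1 i) (ord1 j) h mxE.
  by left; rewrite c0 mul0mx addr0 submxMl.
right; apply/imsetP; exists (u *m B); first by rewrite inE submxMl.
by rewrite c1 mul1mx.
Qed.

Lemma free_col n k (B : 'M['F_2]_(k,n)) (x : 'rV['F_2]_n) :
  row_free B -> ~~ (x <= B)%MS -> row_free (col_mx B x).
Proof.
move=> rf xB; rewrite /row_free -addsmxE.
have := mxrank_sum_cap B x.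
have -> : \rank (B :&: x)%MS = 0%N.
  apply/eqP; rewrite mxrank_eq0; apply: contraR xB => /rowV0Pn [v].
  rewrite sub_capmx => /andP[vB /sub_rVP [a va]] vnz.
  have a1 : a = 1.
    case: (F2_cases a) => // a0; by rewrite va a0 scale0r eqxx in vnz.
  by rewrite va a1 scale1r in vB.
rewrite rank_rV (eqP rf).
have -> : (x != 0) by apply: contra xB => /eqP ->; rewrite sub0mx.
by rewrite addn0 => ->; rewrite addn1.
Qed.

Lemma eqb_col_mx m1 m2 n (A1 B1 : 'M['F_2]_(m1, n)) (A2 B2 : 'M['F_2]_(m2, n)) :
  (col_mx A1 A2 == col_mx B1 B2) = (A1 == B1) && (A2 == B2).
Proof.
apply/eqP/andP => [/eq_col_mx [-> ->] //|[/eqP -> /eqP ->] //].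
Qed.

Lemma cV1_cases (c : 'cV['F_2]_1) : c = 0 \/ c = 1%:M.
Proof.
case: (F2_cases (c 0 0)) => h; [left|right]; apply/matrixP => i j;
  by rewrite (ord1 i) (ord1 j) h !mxE.
Qed.

Lemma card_fib_col n k (B : 'M['F_2]_(k,n)) (x : 'rV_n) a (c : 'cV_1) :
  #|fib (col_mx B x) (col_mx a c)| = #|[set t in fib B a | x 0 t == c 0 0]|.
Proof.
apply: eq_card => t; rewrite !inE col_col_mx eqb_col_mx; congr (_ && _).
apply/eqP/eqP => [<-|h]; first by rewrite mxE.
by apply/matrixP => i j; rewrite (ord1 i) (ord1 j) mxE h.
Qed.

Section Ext.
Variables (n k : nat) (B : 'M['F_2]_(k,n)).
Hypothesis (rf : row_free B) (hv : balv B).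
Let hf := balv_balf hv.
Let m := (#|fib B 0| + 1)%N.

Lemma hf_m a : ((#|fib B a| + (a == 0%R)) = m)%N.
Proof.
apply/eqP; rewrite -(eqn_pmul2r (expn_gt0 2 k)) hf /m.
by move: (hf 0); rewrite eqxx => ->.
Qed.

Definition splits (x : 'rV['F_2]_n) := forall a, ((#|fib B a :&: supp x|).*2 = m)%N.

Lemma ext_to x : ~~ (x <= B)%MS -> balS (sp (col_mx B x)) -> splits x.
Proof.
move=> xB bS a.
have rf' := free_col rf xB.
have hf' := balv_balf (balS_balv rf' bS).
have := hf' (col_mx a 1%:M).
rewrite card_fib_col col_mx_eq0 andbC (_ : (1%:M == 0 :> 'cV['F_2]_1) = false) //=; last first.
  by apply/negbTE/eqP => /matrixP /(_ 0 0); rewrite !mxE.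
rewrite addn0 addn1 expnS mulnA.
have -> : #|[set t in fib B a | x 0 t == (1%:M : 'cV['F_2]_1) 0 0]| = #|fib B a :&: supp x|.
  apply: eq_card => t; rewrite !inE mxE eqxx /=; congr (_ && _).
  by case: (F2_cases (x 0 t)) => ->.
move=> H; apply/eqP; rewrite -(eqn_pmul2r (expn_gt0 2 k)) -muln2 H -(hf 0) eqxx /m //.
Qed.

Lemma ext_of x : splits x -> ~~ (x <= B)%MS /\ balS (sp (col_mx B x)).
Proof.
move=> hs.
have hf' : balf (col_mx B x).
  move=> a'; rewrite -[a']vsubmxK; set a := usubmx a'; set c := dsubmx a'.
  rewrite card_fib_col col_mx_eq0 addn1 expnS mulnA.
  have ha := hs a; have hm := hf_m a.
  case: (cV1_cases c) => ->.
    rewrite eqxx andbT mxE.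
    have -> : #|[set t in fib B a | x 0 t == 0]| = (#|fib B a| - #|fib B a :&: supp x|)%N.
      rewrite -cardsD; apply: eq_card => t; rewrite !inE; case: (x 0 t == 0); by rewrite ?andbT ?andbF.
    have hle : (#|fib B a :&: supp x| <= #|fib B a|)%N by rewrite subset_leq_card ?subsetIl.
    move: (hf 0); rewrite eqxx => <-.
    rewrite -/m; congr (_ * _)%N; move: ha hm; case: (a == 0); lia.
  rewrite (_ : (1%:M == 0 :> 'cV['F_2]_1) = false) ?andbF ?addn0; last first.
    by apply/negbTE/eqP => /matrixP /(_ 0 0); rewrite !mxE.
  have -> : #|[set t in fib B a | x 0 t == (1%:M : 'cV['F_2]_1) 0 0]| = #|fib B a :&: supp x|.
    apply: eq_card => t; rewrite !inE mxE eqxx /=; congr (_ && _).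
    by case: (F2_cases (x 0 t)) => ->.
  by rewrite muln2 ha /m; move: (hf 0); rewrite eqxx.
have hv' := balf_balv hf'.
split; last exact: balv_balS.
apply/negP => xB; have := balv_free hv'; rewrite /row_free -addsmxE.
by rewrite (addsmx_idPl xB) (eqP rf) addn1 => /eqP; lia.
Qed.
End Ext.

End PartG.
Import PartG.

Module PartH.
Set Implicit Arguments. Unset Strict Implicit. Unset Printing Implicit Defensive.
Import GRing.Theory Num.Theory.

Lemma card_split_sets (T A : finType) (L : T -> A) (h : A -> nat) :
  #|[set S : {set T} | [forall a, #|S :&: [set t | L t == a]| == h a]]| =
  \prod_a 'C(#|[set t | L t == a]|, h a).
Proof.
pose Fa a := [set t | L t == a].
pose G a := [pred X : {set T} | (X \subset Fa a) && (#|X| == h a)].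
have -> : \prod_a 'C(#|[set t | L t == a]|, h a) = #|family G|.
  rewrite card_family foldrE big_map /= big_enum /=; apply: eq_bigr => a _.
  by rewrite -cards_draws; apply: eq_card => X; rewrite inE.
pose phi (S : {set T}) : {ffun A -> {set T}} := [ffun a => S :&: Fa a].
have phi_inj : injective phi.
  move=> S1 S2 h12; apply/setP => t.
  have := congr1 (fun f : {ffun A -> {set T}} => t \in f (L t)) h12; rewrite /= !ffunE !inE eqxx !andbT //.
rewrite -(card_imset _ phi_inj); apply: eq_card => f; apply/imsetP/idP.
  case=> S; rewrite inE => /forallP hS ->; apply/familyP => a.
  by rewrite ffunE inE subsetIr (hS a).
move/familyP => hf; exists (\bigcup_a f a).
  rewrite inE; apply/forallP => a.
  have -> : (\bigcup_a0 f a0) :&: [set t | L t == a] = f a.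
    apply/setP => t; rewrite !inE; apply/andP/idP.
      case=> /bigcupP [b _ tb] /eqP Lt.
      by have /andP[/subsetP/(_ t tb) ] := hf b; rewrite inE Lt => /eqP ->.
    move=> ta; split; first by apply/bigcupP; exists a.
    by have /andP[/subsetP/(_ t ta) ] := hf a; rewrite inE.
  by have /andP[_ ] := hf a.
apply/ffunP => a; rewrite ffunE; apply/setP => t; rewrite !inE; apply/idP/andP.
  move=> ta; split; first by apply/bigcupP; exists a.
  by have /andP[/subsetP/(_ t ta) ] := hf a; rewrite inE.
case=> /bigcupP [b _ tb] /eqP Lt.
by have /andP[/subsetP/(_ t tb) ] := hf b; rewrite inE Lt => /eqP ->.
Qed.

End PartH.
Import PartH.

Module PartI.
Set Implicit Arguments. Unset Strict Implicit. Unset Printing Implicit Defensive.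
Import GRing.Theory Num.Theory.

Definition balb n (U : {set 'rV['F_2]_n}) :=
  [forall x in U, (x != 0%R) ==> ((wt x).*2 == n.+1)].

Lemma balbP n (U : {set 'rV['F_2]_n}) : reflect (balS U) (balb U).
Proof.
apply: (iffP forall_inP) => [H x xU xnz|H x xU]; first by move/implyP/(_ xnz)/eqP: (H x xU).
by apply/implyP => xnz; rewrite (H x xU xnz).
Qed.

Lemma supp_charvec n (S : {set 'I_n}) : supp (charvec S) = S.
Proof. by apply/setP => t; rewrite !inE mxE; case: (t \in S). Qed.

Lemma charvec_supp n (x : 'rV['F_2]_n) : charvec (supp x) = x.
Proof.
apply/matrixP => i t; rewrite (ord1 i) !mxE inE.
by case: (F2_cases (x 0%R t)) => ->.
Qed.

Lemma supp_inj n : injective (@supp n).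
Proof. by move=> x y h; rewrite -(charvec_supp x) h charvec_supp. Qed.

Lemma bin_half h : 0 < h -> 'C((h.*2).-1, h) * 2 = 'C(h.*2, h).
Proof.
case: h => [|h] // _.
have -> : (h.+1).*2 = h.*2.+2 by lia.
rewrite /= [RHS]binS.
have -> : 'C(h.*2.+1, h) = 'C(h.*2.+1, h.+1).
  rewrite -(@bin_sub h.*2.+1 h); last lia.
  by congr 'C(_, _); lia.
by rewrite muln2 addnn.
Qed.

Lemma arith_ext h N : 0 < h -> 0 < N ->
  'C(h.*2.-1, h) * 'C(h.*2, h) ^ N.-1 * 2 * h`! ^ (2 * N) = (h.*2)`! ^ N.
Proof.
move=> hp Np.
rewrite -[_ * _ * 2]mulnA [_ ^ _ * 2]mulnC mulnA (bin_half hp).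
rewrite -expnS prednK // expnM -expnMn.
congr (_ ^ _); rewrite -mulnn -(bin_fact (m := h) (n := h.*2)); last by rewrite -addnn leq_addr.
by congr (_ * (_ * _`!)); rewrite -addnn addnK.
Qed.

Section ExtCount.
Variables (n k : nat) (B : 'M['F_2]_(k,n)) (h : nat).
Hypotheses (rf : row_free B) (hv : balv B) (hh : (#|fib B 0%R| + 1 = h.*2)%N).

Lemma ext_count :
  #|[set x : 'rV['F_2]_n | ~~ (x <= B)%MS && balb (sp (col_mx B x))]| * 2 * (h`!) ^ (2 ^ k.+1) =
  ((h.*2)`!) ^ (2 ^ k).
Proof.
have E1 : [set x : 'rV['F_2]_n | ~~ (x <= B)%MS && balb (sp (col_mx B x))] =
          [set x : 'rV['F_2]_n | [forall a, #|supp x :&: [set t | col t B == a]| == h]].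
  apply/setP => x; rewrite !inE; apply/andP/forallP.
    case=> xB /balbP bS a; have := ext_to rf hv xB bS a.
    rewrite setIC hh /fib => H; apply/eqP; lia.
  move=> H; have [] := ext_of rf hv (x := x).
    by move=> a; rewrite hh setIC; move/eqP: (H a) => ->.
  by move=> ? /balbP.
have E2 : #|[set x : 'rV['F_2]_n | [forall a, #|supp x :&: [set t | col t B == a]| == h]]| =
          #|[set S : {set 'I_n} | [forall a, #|S :&: [set t | col t B == a]| == h]]|.
  rewrite -(card_imset _ (@supp_inj n)); apply: eq_card => S.
  apply/imsetP/idP => [[x]|]; first by rewrite !inE => H ->.
  by move=> HS; exists (charvec S); rewrite ?inE supp_charvec //; rewrite inE in HS.
rewrite E1 E2 (card_split_sets (fun t => col t B) (fun _ => h)).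
have hm a : #|[set t | col t B == a]| = (h.*2 - (a == 0%R))%N.
  move: (hf_m hv a); rewrite hh /fib; lia.
rewrite (bigD1 0%R) //= hm eqxx.
rewrite (eq_bigr (fun _ => 'C(h.*2, h))); last by move=> a /negbTE; rewrite hm => ->; rewrite subn0.
rewrite prod_nat_const.
have -> : #|[pred a : 'cV['F_2]_k | a != 0%R]| = (2 ^ k).-1.
  by rewrite (cardC1 (0%R : 'cV['F_2]_k)) card_mx card_F2 muln1.
have hpos : 0 < h by move: hh; case: h => //=; lia.
rewrite (_ : h.*2 - true = h.*2.-1) ?subn1 // expnS.
exact: arith_ext hpos (expn_gt0 2 k).
Qed.
End ExtCount.

End PartI.
Import PartI.

Module PartK.
Set Implicit Arguments. Unset Strict Implicit. Unset Printing Implicit Defensive.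

Lemma geom2 s : (\sum_(0 <= r < s) 2 ^ r).+1 = 2 ^ s.
Proof.
elim: s => [|s IH]; first by rewrite big_geq.
by rewrite big_nat_recr //= -addSn IH expnS mul2n addnn.
Qed.

Lemma qfactS d : qfact 2 d.+1 = qfact 2 d * (2 ^ d.+1).-1.
Proof. by rewrite /qfact big_nat_recr //= -geom2. Qed.

Lemma qfact0 : qfact 2 0 = 1.
Proof. by rewrite /qfact big_geq. Qed.

Lemma den_step w i j : i < j ->
  Gamma_den w i j = 2 * (2 ^ j - 2 ^ i) * Gamma_den w i.+1 j.
Proof.
move=> ij; rewrite /Gamma_den.
have [d ->] : exists d, j = i + d.+1 by exists (j - i.+1); lia.
have -> : i + d.+1 - i = d.+1 by lia.
have -> : i + d.+1 - i.+1 = d by lia.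
have -> : d.+1 * (i + d.+1 + i + 1) = i.+1 * 2 + d * (i + d.+1 + i.+1 + 1) by nia.
rewrite divnMDl // qfactS.
have -> : 2 ^ (i + d.+1) - 2 ^ i = 2 ^ i * (2 ^ d.+1).-1.
  by rewrite expnD -subn1 mulnBr muln1.
rewrite expnD expnS; set X := 2 ^ (_ %/ 2); set F := _ ^ _.
set Q := qfact 2 d; set P := (2 ^ d.+1).-1; set I := 2 ^ i.
set Y := (_`! ^ _). nia.
Qed.

End PartK.
Import PartK.

Module PartJ.
Set Implicit Arguments. Unset Strict Implicit. Unset Printing Implicit Defensive.
Import GRing.Theory Num.Theory.

Definition good n k (U : {set 'rV['F_2]_n}) := is_subspace_dim k U && balb U.
Definition Tc n (U : {set 'rV['F_2]_n}) j := #|[set V | good j V & U \subset V]|.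
Definition Ext n k (U : {set 'rV['F_2]_n}) := [set x | (x \notin U) && good k.+1 (addvx U x)].

Lemma good_basis n k U : good k U ->
  exists B : 'M['F_2]_(k,n), [/\ row_free B, balv B & U = sp B].
Proof.
case/andP => /subdim_ex [B [rf ->]] /balbP bS.
by exists B; split => //; apply: balS_balv.
Qed.

Lemma card_good n k U : @good n k U -> #|U| = 2 ^ k.
Proof. by case/good_basis => B [rf _ ->]; rewrite card_sp (eqP rf). Qed.

Lemma balS_sub n (U V : {set 'rV['F_2]_n}) : U \subset V -> balS V -> balS U.
Proof. by move=> /subsetP sUV bV x /sUV; apply: bV. Qed.

Lemma addv_good n k U V j x : @good n k U -> good j V -> U \subset V ->
  x \in V -> x \notin U -> good k.+1 (addvx U x) /\ addvx U x \subset V.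
Proof.
move=> gU gV sUV xV xU.
have [B [rf hv eU]] := good_basis gU.
have [C [rfC hvC eV]] := good_basis gV.
have sub : addvx U x \subset V.
  apply/subsetP => y; rewrite /addvx inE => /orP[/(subsetP sUV) //|/imsetP [u uU ->]].
  move: (subsetP sUV u uU) xV; rewrite eV !inE; exact: addmx_sub.
split => //; apply/andP; split.
  rewrite eU addv_sp -addn1; apply: subdim_of; apply: free_col => //.
  by move: xU; rewrite eU inE.
apply/balbP; apply: balS_sub sub _; rewrite eV; exact: balv_balS.
Qed.

Lemma double_count n k j (U : {set 'rV['F_2]_n}) : good k U ->
  \sum_(x in Ext k U) Tc (addvx U x) j = Tc U j * (2 ^ j - 2 ^ k).
Proof.
move=> gU.
have [B [rf hv eU]] := good_basis gU.
have U0 : (0 : 'rV_n)%R \in U by rewrite eU inE sub0mx.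
have UsubA x : U \subset addvx U x by apply/subsetP => u uU; rewrite inE uU.
have xA x : x \in addvx U x by rewrite inE; apply/orP; right; apply/imsetP; exists 0%R => //; rewrite add0r.
rewrite /Tc (eq_bigr (fun x => \sum_V ((good j V) && (addvx U x \subset V) : nat))); last first.
  move=> x _; rewrite -sum1_card [LHS]big_mkcond /=; apply: eq_bigr => V _.
  by rewrite inE; case: (_ && _).
rewrite exchange_big /= -sum1_card big_distrl /= [RHS]big_mkcond /=; apply: eq_bigr => V _.
rewrite inE; case gV : (good j V) => /=; last by rewrite big1 ?mul0n.
have [sUV|nsUV] := boolP (U \subset V); last first.
  rewrite big1 ?mul0n // => x _; case sA: (addvx U x \subset V) => //.
  by rewrite (subset_trans (UsubA x) sA) in nsUV.
rewrite mul1n.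
transitivity #|V :\: U|.
  rewrite -sum1_card [RHS]big_mkcond /= [LHS]big_mkcond /=; apply: eq_bigr => x _.
  rewrite !inE; case xV: (x \in V); case xU: (x \in U) => //=.
    have [g s] := addv_good gU gV sUV xV (negbT xU); by rewrite g s.
  case: ifP => // _; case sA: (addvx U x \subset V) => //.
  by rewrite (subsetP sA x (xA x)) in xV.
by rewrite cardsD (setIidPr sUV) (card_good gV) (card_good gU).
Qed.

Lemma ext_eq n k (U : {set 'rV['F_2]_n}) (B : 'M['F_2]_(k,n)) :
  row_free B -> U = sp B ->
  Ext k U = [set x : 'rV['F_2]_n | ~~ (x <= B)%MS && balb (sp (col_mx B x))].
Proof.
move=> rf eU; apply/setP => x; rewrite !inE eU inE.
case xB: (x <= B)%MS => //=.
rewrite /good addv_sp.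
have -> : is_subspace_dim k.+1 (sp (col_mx B x)) by rewrite -addn1; apply: subdim_of; apply: free_col; rewrite ?xB.
by [].
Qed.

Lemma count_main n j : (2 ^ j %| n.+1) -> forall d i (U : {set 'rV['F_2]_n}),
  i + d = j -> good i U -> Tc U j * Gamma_den n.+1 i j = Gamma_num n.+1 i.
Proof.
move=> hw; elim=> [|d IH] i U hij gU.
  rewrite addn0 in hij; subst j; rewrite /Tc.
  have -> : [set V | good i V & U \subset V] = [set U].
    apply/setP => V; rewrite !inE; apply/andP/eqP => [[gV sUV]|->]; last by rewrite gU subxx.
    apply/eqP; rewrite eq_sym eqEcard sUV (card_good gV) (card_good gU) leqnn //.
  by rewrite /Tc cards1 mul1n /Gamma_den /Gamma_num subnn mul0n div0n expn0 mul1n qfact0 muln1.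
have ij : i < j by lia.
have [B [rf hv eU]] := good_basis gU.
have hf0 := balv_balf hv 0%R; rewrite eqxx in hf0.
have [h hh] : exists h, (#|fib B 0%R| + 1 = h.*2)%N.
  have : 2 ^ i.+1 %| (#|fib B 0%R| + 1) * 2 ^ i.
    by rewrite hf0 (dvdn_trans _ hw) // dvdn_exp2l.
  rewrite expnS dvdn_pmul2r ?expn_gt0 // => /dvdnP [q ->]; exists q; by rewrite muln2.
have hE := ext_count rf hv hh; rewrite -(ext_eq rf eU) in hE.
have wE : n.+1 = h.*2 * 2 ^ i by rewrite -hh.
have N0 : Gamma_num n.+1 i = ((h.*2)`!) ^ (2 ^ i).
  by rewrite /Gamma_num wE mulnK ?expn_gt0.
have N1 : Gamma_num n.+1 i.+1 = (h`!) ^ (2 ^ i.+1).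
  by rewrite /Gamma_num wE expnS -muln2 -mulnA mulnK // muln_gt0 expn_gt0.
rewrite (den_step _ ij) N0 -hE -N1.
have E : \sum_(x in Ext i U) Tc (addvx U x) j * Gamma_den n.+1 i.+1 j =
         #|Ext i U| * Gamma_num n.+1 i.+1.
  rewrite (eq_bigr (fun _ => Gamma_num n.+1 i.+1)) ?sum_nat_const //.
  move=> x; rewrite inE => /andP[_ gx]; apply: IH gx; lia.
rewrite -big_distrl /= double_count // in E.
rewrite [RHS]mulnAC -E; nia.
Qed.

End PartJ.
Import PartJ.

Unset Implicit Arguments. Set Strict Implicit. Set Printing Implicit Defensive.
Local Close Scope ring_scope.
Import GRing.Theory Num.Theory.

Theorem lemma7 (n : nat) (hn : (n %% 6 = 1) \/ (n %% 6 = 3)) (i j : nat)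
  (hij : i <= j) (hDj : Ddot n j != set0) :
  (forall U, U \in Ddot n i ->
     #|[set V in Ddot n j | U \subset V]| * Gamma_den n.+1 i j = Gamma_num n.+1 i)
  /\ #|Ddot n j| * Gamma_den n.+1 0 j = Gamma_num n.+1 0.
Proof.
have [V0 V0in] := set0Pn _ hDj.
have hw : 2 ^ j %| n.+1.
  have bV0 := Ddot_bal V0in.
  move: V0in; rewrite inE => /andP[/subdim_ex [B0 [rf0 eV0]] _].
  have hv0 : balv B0 by apply: balS_balv rf0 _; rewrite -eV0.
  by rewrite -(balv_balf hv0 0%R) dvdn_mull.
have DE V : (V \in Ddot n j) = good j V.
  apply/idP/idP.
    move=> VD; rewrite /good; move: (VD); rewrite inE => /andP[-> _] /=.
    by apply/balbP; apply: Ddot_bal VD.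
  by case/andP => sd /balbP bV; apply: Ddot_of V0in sd bV.
have setE U : [set V in Ddot n j | U \subset V] = [set V | good j V & U \subset V].
  by apply/setP => V; rewrite [LHS]inE [RHS]inE DE.
split.
  move=> U Ui; rewrite setE; apply: (count_main hw (d := j - i)); first lia.
  rewrite /good; move: (Ui); rewrite inE => /andP[-> _] /=.
  by apply/balbP; apply: Ddot_bal Ui.
have g0 : good 0 [set 0%R : 'rV['F_2]_n].
  apply/andP; split.
    apply/existsP; exists 0%R; rewrite mxrank0 eqxx andbT.
    by apply/eqP/setP => x; rewrite !inE submx0.
  by apply/balbP => x; rewrite inE => /eqP ->; rewrite eqxx.
have -> : #|Ddot n j| = Tc [set 0%R : 'rV['F_2]_n] j.
  rewrite /Tc -setE; apply: eq_card => V; rewrite [RHS]inE.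
  case VD: (V \in Ddot n j) => //=.
  rewrite DE in VD; have [B [_ _ ->]] := good_basis VD.
  by rewrite sub1set inE sub0mx.
exact: (count_main hw (d := j)).
Qed.
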